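(* Let $G$ be a finitely generated group such that $[e]_g$ is a subgroup of $G$ for every $g\in G$. If $G$ satisfies the descending chain condition for normal subgroups, then $G$ is nilpotent.
   Context: $[x,y]=x^{-1}y^{-1}xy$; $[e]_g=\{[x,g]\mid x\in G\}$. The descending chain condition for normal subgroups (Min-n) means: for every chain $H_1\ge H_2\ge H_3\ge\dots$ of normal subgroups of $G$ there exists $m$ with $H_m=H_{m+1}=\cdots$. *)

(* Defs.v *)
From Stdlib Require Import List.

Record Group := {
  carrier :> Type;
  mul : carrier -> carrier -> carrier;
  inv : carrier -> carrier;
  one : carrier;
  mul_assoc : forall x y z, mul x (mul y z) = mul (mul x y) z;
  mul_one_l : forall x, mul one x = x;
  mul_inv_l : forall x, mul (inv x) x = one
}.

Arguments mul {g} _ _.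
Arguments inv {g} _.
Arguments one {g}.

Definition comm {G : Group} (x y : G) : G :=
  mul (mul (mul (inv x) (inv y)) x) y.

Definition subset (G : Group) := G -> Prop.

Definition is_subgroup {G : Group} (H : subset G) : Prop :=
  H one /\ (forall x y, H x -> H y -> H (mul x y)) /\ (forall x, H x -> H (inv x)).

Definition is_normal {G : Group} (H : subset G) : Prop :=
  is_subgroup H /\ (forall x g, H x -> H (mul (mul (inv g) x) g)).

Definition gen {G : Group} (S : subset G) : subset G :=
  fun x => forall H : subset G, is_subgroup H -> (forall y, S y -> H y) -> H x.

Definition finitely_generated (G : Group) : Prop :=
  exists l : list G, forall x : G, gen (fun y => In y l) x.

(* [e]_g = { [x,g] | x in G } *)
Definition comm_set {G : Group} (g : G) : subset G :=
  fun z => exists x : G, z = comm x g.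

Definition min_n (G : Group) : Prop :=
  forall H : nat -> subset G,
    (forall n, is_normal (H n)) ->
    (forall n x, H (S n) x -> H n x) ->
    exists m, forall k, m <= k -> forall x, H k x <-> H m x.

Fixpoint lcs (G : Group) (n : nat) : subset G :=
  match n with
  | O => fun _ => True
  | S n' => gen (fun z => exists x g, lcs G n' x /\ z = comm x g)
  end.

Definition nilpotent (G : Group) : Prop :=
  exists n, forall x : G, lcs G n x -> x = one.

(* Main.v *)
Require Import Defs.
From Stdlib Require Import List.


Lemma mul_assoc' {G : Group} (x y z : G) : mul x (mul y z) = mul (mul x y) z.
Proof. apply mul_assoc. Qed.
Lemma mul_one_l' {G : Group} (x : G) : mul one x = x.
Proof. apply mul_one_l. Qed.
Lemma mul_inv_l' {G : Group} (x : G) : mul (inv x) x = one.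
Proof. apply mul_inv_l. Qed.

Lemma mul_inv_r' {G : Group} (x : G) : mul x (inv x) = one.
Proof.
  rewrite <- (mul_one_l' (mul x (inv x))).
  rewrite <- (mul_inv_l' (inv x)) at 1.
  rewrite <- mul_assoc'. rewrite (mul_assoc' (inv x) x (inv x)).
  rewrite mul_inv_l', mul_one_l', mul_inv_l'. reflexivity.
Qed.
Lemma mul_one_r' {G : Group} (x : G) : mul x one = x.
Proof. rewrite <- (mul_inv_l' x), mul_assoc', mul_inv_r', mul_one_l'. reflexivity. Qed.
Lemma inv_inv' {G : Group} (x : G) : inv (inv x) = x.
Proof.
  rewrite <- (mul_one_r' (inv (inv x))), <- (mul_inv_l' x), mul_assoc', mul_inv_l', mul_one_l'.
  reflexivity.
Qed.
Lemma inv_mul' {G : Group} (x y : G) : inv (mul x y) = mul (inv y) (inv x).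
Proof.
  rewrite <- (mul_one_r' (inv (mul x y))).
  assert (E : mul (mul x y) (mul (inv y) (inv x)) = one).
  { rewrite mul_assoc'. rewrite <- (mul_assoc' x y (inv y)). rewrite mul_inv_r', mul_one_r', mul_inv_r'. reflexivity. }
  rewrite <- E. rewrite mul_assoc', mul_inv_l', mul_one_l'. reflexivity.
Qed.
Lemma inv_one' {G : Group} : inv (@one G) = one.
Proof. rewrite <- (mul_one_r' (inv one)). apply mul_inv_l'. Qed.
Lemma cancel1 {G : Group} (x y : G) : mul (mul x y) (inv y) = x.
Proof. rewrite <- mul_assoc', mul_inv_r', mul_one_r'. reflexivity. Qed.
Lemma cancel2 {G : Group} (x y : G) : mul (mul x (inv y)) y = x.
Proof. rewrite <- mul_assoc', mul_inv_l', mul_one_r'. reflexivity. Qed.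

Ltac gnorm :=
  repeat progress (rewrite ?inv_mul', ?inv_inv', ?inv_one');
  rewrite ?mul_assoc';
  repeat progress (rewrite ?cancel1, ?cancel2, ?mul_inv_l', ?mul_inv_r', ?mul_one_l', ?mul_one_r').

Definition conj {G : Group} (h x : G) : G := mul (mul (inv h) x) h.

Ltac geq := unfold comm, conj; gnorm; reflexivity.

Lemma sg_one {G : Group} {H : subset G} : is_subgroup H -> H one.
Proof. intros [a _]; exact a. Qed.
Lemma sg_mul {G : Group} {H : subset G} : is_subgroup H -> forall x y, H x -> H y -> H (mul x y).
Proof. intros [_ [a _]]; exact a. Qed.
Lemma sg_inv {G : Group} {H : subset G} : is_subgroup H -> forall x, H x -> H (inv x).
Proof. intros [_ [_ a]]; exact a. Qed.
Lemma nm_sub {G : Group} {H : subset G} : is_normal H -> is_subgroup H.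
Proof. intros [a _]; exact a. Qed.
Lemma nm_conj {G : Group} {H : subset G} : is_normal H -> forall h x, H x -> H (conj h x).
Proof. intros [_ a] h x Hx; exact (a x h Hx). Qed.

Lemma gen_sub {G : Group} (S : subset G) : is_subgroup (gen S).
Proof.
  split; [|split].
  - intros H hH _. apply (sg_one hH).
  - intros x y Hx Hy H hH hS. apply (sg_mul hH); [apply Hx|apply Hy]; auto.
  - intros x Hx H hH hS. apply (sg_inv hH); apply Hx; auto.
Qed.
Lemma gen_incl {G : Group} (S : subset G) x : S x -> gen S x.
Proof. intros Sx H _ hS. auto. Qed.

Lemma gen_normal {G : Group} (T : subset G) :
  (forall t h, T t -> T (conj h t)) -> is_normal (gen T).
Proof.
  intros hT. split. apply gen_sub.
  intros x h Hx.
  assert (P : is_subgroup (fun z => forall h, gen T (conj h z))).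
  { split; [|split].
    - intros h'. replace (conj h' one) with (@one G) by geq. apply (sg_one (gen_sub T)).
    - intros a b Ha Hb h'. replace (conj h' (mul a b)) with (mul (conj h' a) (conj h' b)) by geq.
      apply (sg_mul (gen_sub T)); auto.
    - intros a Ha h'. replace (conj h' (inv a)) with (inv (conj h' a)) by geq.
      apply (sg_inv (gen_sub T)); auto. }
  apply (Hx _ P). intros y Ty h'. apply gen_incl. auto.
Qed.

Lemma zmod_normal {G : Group} (K : subset G) : is_normal K ->
  is_normal (fun x => forall g, K (comm x g)).
Proof.
  intros hK. pose proof (nm_sub hK) as hS. split; [split; [|split]|].
  - intros g. replace (comm one g) with (@one G) by geq. apply (sg_one hS).
  - intros x y Hx Hy g. replace (comm (mul x y) g) with (mul (conj y (comm x g)) (comm y g)) by geq.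
    apply (sg_mul hS); [apply (nm_conj hK)|]; auto.
  - intros x Hx g. replace (comm (inv x) g) with (inv (conj (inv x) (comm x g))) by geq.
    apply (sg_inv hS). apply (nm_conj hK). auto.
  - intros x h Hx g. change (K (comm (conj h x) g)).
    replace (comm (conj h x) g) with (conj h (comm x (mul (mul h g) (inv h)))) by geq.
    apply (nm_conj hK). auto.
Qed.

Lemma cmod_sub {G : Group} (K : subset G) (c : G) : is_normal K ->
  is_subgroup (fun g => K (comm c g)).
Proof.
  intros hK. pose proof (nm_sub hK) as hS. split; [|split].
  - replace (comm c one) with (@one G) by geq. apply (sg_one hS).
  - intros x y Hx Hy. replace (comm c (mul x y)) with (mul (comm c y) (conj y (comm c x))) by geq.
    apply (sg_mul hS); [|apply (nm_conj hK)]; auto.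
  - intros x Hx. replace (comm c (inv x)) with (inv (conj (inv x) (comm c x))) by geq.
    apply (sg_inv hS). apply (nm_conj hK). auto.
Qed.

Lemma commset_normal {G : Group} (s : G) : is_subgroup (comm_set s) -> is_normal (comm_set s).
Proof.
  intros hC. split; auto. intros z h [y ->]. change (comm_set s (conj h (comm y s))).
  replace (conj h (comm y s)) with (mul (comm (mul y h) s) (inv (comm h s))) by geq.
  apply (sg_mul hC). exists (mul y h); reflexivity. apply (sg_inv hC). exists h; reflexivity.
Qed.

Definition prodset {G : Group} (M C : subset G) : subset G :=
  fun z => exists m c, M m /\ C c /\ z = mul m c.

Lemma prod_normal {G : Group} (M C : subset G) : is_normal M -> is_normal C -> is_normal (prodset M C).
Proof.
  intros hM hC. pose proof (nm_sub hM) as sM. pose proof (nm_sub hC) as sC.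
  split; [split; [|split]|].
  - exists one, one. split; [apply (sg_one sM)|split; [apply (sg_one sC)|]]. geq.
  - intros x y [m1 [c1 [H1 [H2 ->]]]] [m2 [c2 [H3 [H4 ->]]]].
    exists (mul m1 (conj (inv c1) m2)), (mul c1 c2). split; [|split].
    + apply (sg_mul sM); auto. apply (nm_conj hM); auto.
    + apply (sg_mul sC); auto.
    + geq.
  - intros x [m [c [H1 [H2 ->]]]]. exists (conj c (inv m)), (inv c). split; [|split].
    + apply (nm_conj hM). apply (sg_inv sM); auto.
    + apply (sg_inv sC); auto.
    + geq.
  - intros x h [m [c [H1 [H2 ->]]]]. exists (conj h m), (conj h c). split; [|split].
    + apply (nm_conj hM); auto.
    + apply (nm_conj hC); auto.
    + geq.
Qed.

Lemma lcs_normal (G : Group) n : is_normal (lcs G n).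
Proof.
  induction n as [|n IH].
  - simpl. split; [split; [|split]|]; auto.
  - simpl. apply gen_normal. intros t h [x [g [Hx ->]]].
    exists (conj h x), (conj h g). split. apply (nm_conj IH); auto. geq.
Qed.

Lemma lcs_decr (G : Group) n x : lcs G (S n) x -> lcs G n x.
Proof.
  intros H. simpl in H. apply H. apply nm_sub, lcs_normal.
  intros y [x' [g [Hx ->]]].
  replace (comm x' g) with (mul (inv x') (conj g x')) by geq.
  pose proof (lcs_normal G n) as hN.
  apply (sg_mul (nm_sub hN)). apply (sg_inv (nm_sub hN)); auto. apply (nm_conj hN); auto.
Qed.

Lemma fng (G : Group) (l : list G) : (forall x : G, gen (fun y => In y l) x) ->
  forall n, exists S : list G, (forall s, In s S -> lcs G n s) /\
    (forall K, is_normal K -> (forall s, In s S -> K s) -> forall x, lcs G n x -> K x).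
Proof.
  intros hl n. induction n as [|n [S [HS1 HS2]]].
  - exists l. split. intros; simpl; auto.
    intros K hK Hl x _. apply (hl x K (nm_sub hK) Hl).
  - exists (flat_map (fun c => map (fun g => comm c g) l) S). split.
    + intros s Hs. apply in_flat_map in Hs. destruct Hs as [c [Hc Hs]].
      apply in_map_iff in Hs. destruct Hs as [g [<- _]].
      simpl. apply gen_incl. exists c, g. split; auto.
    + intros K hK HK x Hx. simpl in Hx. apply Hx. apply (nm_sub hK).
      intros y [x' [g [Hx' ->]]].
      assert (Z : forall c, In c S -> forall g, K (comm c g)).
      { intros c Hc g'. apply (hl g' _ (cmod_sub K c hK)).
        intros g0 Hg0. apply HK. apply in_flat_map. exists c. split; auto.
        apply in_map_iff. exists g0. split; auto. }
      exact (HS2 _ (zmod_normal K hK) Z x' Hx' g).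
Qed.


Lemma main_lemma (G : Group) (hC : forall g : G, is_subgroup (comm_set g)) (m : nat)
  (hst : forall x, lcs G m x -> lcs G (S m) x) :
  forall T : list G, (forall s, In s T -> lcs G m s) ->
  forall M, is_normal M -> (forall x, M x -> lcs G m x) ->
  (forall K, is_normal K -> (forall s, In s T -> K s) -> (forall x, M x -> K x) ->
     forall x, lcs G m x -> K x) ->
  forall x, lcs G m x -> M x.
Proof.
  pose proof (lcs_normal G m) as hN.
  intros T. induction T as [|s T IH]; intros HT M hM HMN Hgen.
  - apply Hgen; auto. intros s [].
  - set (M' := prodset M (comm_set s)).
    assert (hM' : is_normal M') by (apply prod_normal; auto; apply commset_normal; auto).
    set (Z := fun x => lcs G m x /\ forall y, M' (comm x y)).
    assert (hZ : is_normal Z).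
    { pose proof (zmod_normal M' hM') as hz. split; [split; [|split]|].
      - split. apply (sg_one (nm_sub hN)). apply (sg_one (nm_sub hz)).
      - intros a b [Ha1 Ha2] [Hb1 Hb2]. split. apply (sg_mul (nm_sub hN)); auto.
        apply (sg_mul (nm_sub hz) a b Ha2 Hb2).
      - intros a [Ha1 Ha2]. split. apply (sg_inv (nm_sub hN)); auto. apply (sg_inv (nm_sub hz) a Ha2).
      - intros a h [Ha1 Ha2]. split. apply (nm_conj hN h a Ha1). apply (nm_conj hz h a Ha2). }
    assert (NZ : forall x, lcs G m x -> Z x).
    { apply IH; auto.
      - intros t Ht; apply HT; simpl; auto.
      - intros x [Hx _]; auto.
      - intros K hK HT' HZK x Hx. apply Hgen; auto.
        + intros t [<- | Ht]; auto. apply HZK. split. apply HT; simpl; auto.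
          intros y. exists one, (inv (comm y s)). split. apply (sg_one (nm_sub hM)).
          split. apply (sg_inv (hC s)). exists y; reflexivity. geq.
        + intros a Ha. apply HZK. split; auto. intros y. exists (comm a y), one.
          split. replace (comm a y) with (mul (inv a) (conj y a)) by geq.
          apply (sg_mul (nm_sub hM)). apply (sg_inv (nm_sub hM)); auto. apply (nm_conj hM); auto.
          split. apply (sg_one (hC s)). geq. }
    assert (NM' : forall x, lcs G m x -> M' x).
    { intros x Hx. apply hst in Hx. simpl in Hx. apply Hx. apply (nm_sub hM').
      intros y [x' [g [Hx' ->]]]. apply (NZ x' Hx'). }
    assert (Ms : M s).
    { destruct (NM' s (HT s (or_introl eq_refl))) as [m0 [c [Hm [[y ->] E]]]].
      assert (E2 : m0 = conj y s).
      { assert (E1 : mul s (inv (comm y s)) = m0) by (rewrite E at 1; apply cancel1).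
        rewrite <- E1. geq. }
      replace s with (conj (inv y) m0) by (rewrite E2; geq).
      apply (nm_conj hM); auto. }
    intros x Hx. destruct (NM' x Hx) as [m0 [c [Hm [[y ->] ->]]]].
    apply (sg_mul (nm_sub hM)); auto.
    replace (comm y s) with (mul (conj y (inv s)) s) by geq.
    apply (sg_mul (nm_sub hM)); auto. apply (nm_conj hM). apply (sg_inv (nm_sub hM)); auto.
Qed.

Theorem corollary3 (G : Group) :
  finitely_generated G ->
  (forall g : G, is_subgroup (comm_set g)) ->
  min_n G ->
  nilpotent G.
Proof.
  intros [l hl] hC hmin.
  destruct (hmin (lcs G) (lcs_normal G) (lcs_decr G)) as [m Hm].
  assert (hst : forall x, lcs G m x -> lcs G (S m) x).
  { intros x Hx. apply (Hm (S m) (le_S _ _ (le_n m)) x). auto. }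
  destruct (fng G l hl m) as [S0 [HS1 HS2]].
  exists m. intros x Hx.
  apply (main_lemma G hC m hst S0 HS1 (fun z => z = one)); auto.
  - split; [split; [|split]|].
    + reflexivity.
    + intros a b -> ->. apply mul_one_l'.
    + intros a ->. apply inv_one'.
    + intros a h ->. geq.
  - intros a ->. apply (sg_one (nm_sub (lcs_normal G m))).
  - intros K hK HK _. apply HS2; auto.
Qed.
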